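(* Let $S$ be a $\Gamma$-semiring with zero having a left unity and a right unity, and let $n$ be a positive integer. Then there exists an inclusion preserving bijection between the set of all fuzzy ideals of $S$ and the set of all fuzzy ideals of the matrix $\Gamma_n$-semiring $S_n$.
   Context: A $\Gamma$-semiring: $S$ and $\Gamma$ are additive commutative semigroups with a map $S\times\Gamma\times S\to S$, $(a,\alpha,b)\mapsto a\alpha b$, such that $(a+b)\alpha c=a\alpha c+b\alpha c$, $a\alpha(b+c)=a\alpha b+a\alpha c$, $a(\alpha+\beta)b=a\alpha b+a\beta b$, $a\alpha(b\beta c)=(a\alpha b)\beta c$. With zero: $(S,+)$, $(\Gamma,+)$ are monoids, $0_S\alpha x=0_S=x\alpha0_S$, $x0_\Gamma y=0_S$. A left unity of $S$ is a finite family $e_i\in S,\delta_i\in\Gamma$ with $\sum_ie_i\delta_ia=a$ for all $a\in S$; a right unity is a finite family $\gamma_j\in\Gamma,f_j\in S$ with $\sum_ja\gamma_jf_j=a$ for all $a\in S$. $S_n$ (resp. $\Gamma_n$) is the set of $n\times n$ matrices with entries in $S$ (resp. $\Gamma$), with entrywise addition and, for $A=[a_{ij}],B=[b_{ij}]\in S_n$, $\Delta=[\delta_{ij}]\in\Gamma_n$, $(A\Delta B)_{ij}=\sum_{k,l}a_{ik}\delta_{kl}b_{lj}$; this makes $S_n$ a $\Gamma_n$-semiring with zero. A fuzzy ideal of a $\Gamma$-semiring $T$ is a map $\mu:T\to[0,1]$, not identically $0$, with $\mu(x+y)\ge\min[\mu(x),\mu(y)]$, $\mu(x\gamma y)\ge\mu(y)$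 and $\mu(x\gamma y)\ge\mu(x)$ for all $x,y\in T$ and all $\gamma$; by convention fuzzy ideals satisfy $\mu(0)=1$. Inclusion of fuzzy subsets is pointwise $\le$. *)

(* Defs.v *)
From mathcomp Require Import all_boot all_algebra.
From Stdlib Require Import Reals.

Set Implicit Arguments.
Unset Strict Implicit.
Unset Printing Implicit Defensive.

Record GammaSemiring := {
  gsS : Type;
  gsG : Type;
  gs_add : gsS -> gsS -> gsS;
  gs_zero : gsS;
  gs_gadd : gsG -> gsG -> gsG;
  gs_gzero : gsG;
  gs_mul : gsS -> gsG -> gsS -> gsS;
  gs_addA : forall a b c, gs_add a (gs_add b c) = gs_add (gs_add a b) c;
  gs_addC : forall a b, gs_add a b = gs_add b a;
  gs_add0 : forall a, gs_add gs_zero a = a;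
  gs_gaddA : forall a b c, gs_gadd a (gs_gadd b c) = gs_gadd (gs_gadd a b) c;
  gs_gaddC : forall a b, gs_gadd a b = gs_gadd b a;
  gs_gadd0 : forall a, gs_gadd gs_gzero a = a;
  gs_mulDl : forall a b g c,
      gs_mul (gs_add a b) g c = gs_add (gs_mul a g c) (gs_mul b g c);
  gs_mulDr : forall a g b c,
      gs_mul a g (gs_add b c) = gs_add (gs_mul a g b) (gs_mul a g c);
  gs_mulDm : forall a g h b,
      gs_mul a (gs_gadd g h) b = gs_add (gs_mul a g b) (gs_mul a h b);
  gs_mulA : forall a g b h c,
      gs_mul a g (gs_mul b h c) = gs_mul (gs_mul a g b) h c;
  gs_mul0l : forall g x, gs_mul gs_zero g x = gs_zero;
  gs_mul0r : forall x g, gs_mul x g gs_zero = gs_zero;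
  gs_mul0m : forall x y, gs_mul x gs_gzero y = gs_zero
}.

Definition gsum (T : GammaSemiring) (k : nat) (f : 'I_k -> gsS T) : gsS T :=
  \big[@gs_add T/gs_zero T]_(i < k) f i.

Definition has_left_unity (T : GammaSemiring) : Prop :=
  exists (k : nat) (e : 'I_k -> gsS T) (d : 'I_k -> gsG T),
    forall a, gsum (fun i => gs_mul (e i) (d i) a) = a.

Definition has_right_unity (T : GammaSemiring) : Prop :=
  exists (k : nat) (g : 'I_k -> gsG T) (f : 'I_k -> gsS T),
    forall a, gsum (fun j => gs_mul a (g j) (f j)) = a.

Definition mx_add (T : GammaSemiring) (n : nat) (A B : 'M[gsS T]_n)
  : 'M[gsS T]_n := \matrix_(i, j) gs_add (A i j) (B i j).

Definition mx_zero (T : GammaSemiring) (n : nat) : 'M[gsS T]_n :=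
  \matrix_(i, j) gs_zero T.

Definition mx_mul (T : GammaSemiring) (n : nat)
  (A : 'M[gsS T]_n) (D : 'M[gsG T]_n) (B : 'M[gsS T]_n) : 'M[gsS T]_n :=
  \matrix_(i, j) gsum (fun k : 'I_n => gsum (fun l : 'I_n =>
                          gs_mul (A i k) (D k l) (B l j))).

(* Values lie in [0,1], mu is not
   identically 0, mu(x+y) >= min, mu(x g y) >= mu y and >= mu x, and by the
   stated convention mu(0) = 1. *)
Definition fuzzy_ideal (X G : Type) (add : X -> X -> X) (zero : X)
  (mul : X -> G -> X -> X) (mu : X -> R) : Prop :=
  (forall x, (0 <= mu x <= 1)%R) /\
  (exists x, mu x <> 0%R) /\
  (forall x y, (Rmin (mu x) (mu y) <= mu (add x y))%R) /\
  (forall x g y, (mu y <= mu (mul x g y))%R) /\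
  (forall x g y, (mu x <= mu (mul x g y))%R) /\
  mu zero = 1%R.

Definition fuzzy_ideal_S (T : GammaSemiring) (mu : gsS T -> R) : Prop :=
  fuzzy_ideal (@gs_add T) (gs_zero T) (@gs_mul T) mu.

Definition fuzzy_ideal_Sn (T : GammaSemiring) (n : nat)
  (mu : 'M[gsS T]_n -> R) : Prop :=
  fuzzy_ideal (@mx_add T n) (mx_zero T n) (@mx_mul T n) mu.

Definition fuzzy_incl (X : Type) (mu nu : X -> R) : Prop :=
  forall x, (mu x <= nu x)%R.

(* Main.v *)
Require Import Defs.
From HB Require Import structures.
From mathcomp Require Import all_boot all_algebra.
From Stdlib Require Import Reals Lra FunctionalExtensionality.

Set Implicit Arguments.
Unset Strict Implicit.
Unset Printing Implicit Defensive.

Lemma bigmin_le k (g : 'I_k -> R) i : (\big[Rmin/1%R]_(j < k) g j <= g i)%R.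
Proof.
elim: k g i => [|k IH] g i; first by case: i.
rewrite big_ord_recl.
case: (unliftP ord0 i) => [j ->|->].
- apply: Rle_trans (Rmin_r _ _) _; exact: IH.
- exact: Rmin_l.
Qed.

Lemma bigmin_ge k (g : 'I_k -> R) r : (r <= 1)%R -> (forall i, r <= g i)%R ->
  (r <= \big[Rmin/1%R]_(j < k) g j)%R.
Proof.
move=> r1 H; apply: (big_ind (fun x => r <= x)%R) => //.
by move=> x y hx hy; apply: Rmin_glb.
Qed.

Lemma bigmin_le1 k (g : 'I_k -> R) : (\big[Rmin/1%R]_(j < k) g j <= 1)%R.
Proof.
elim: k g => [|k IH] g; first by rewrite big_ord0; apply: Rle_refl.
rewrite big_ord_recl; exact: Rle_trans (Rmin_r _ _) (IH _).
Qed.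

Lemma fsum_ge (X G : Type) (add : X -> X -> X) (zero : X)
  (mul : X -> G -> X -> X) (mu : X -> R) k (f : 'I_k -> X) r :
  fuzzy_ideal add zero mul mu -> (r <= 1)%R -> (forall i, r <= mu (f i))%R ->
  (r <= mu (\big[add/zero]_(i < k) f i))%R.
Proof.
move=> [_ [_ [Had [_ [_ H0]]]]] r1 H.
apply: (big_ind (fun x => r <= mu x)%R) => //; first by rewrite H0.
move=> x y hx hy; apply: Rle_trans (Had x y); exact: Rmin_glb.
Qed.

Section Main.
Variable T : GammaSemiring.
Variable n : nat.
Hypothesis hn : (0 < n)%N.

Local Notation S := (gsS T).
Local Notation Gm := (gsG T).
Local Notation z := (gs_zero T).

HB.instance Definition _ := Monoid.isComLaw.Build S z (@gs_add T)
  (@gs_addA T) (@gs_addC T) (@gs_add0 T).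

Lemma gsum_delta k (i0 : 'I_k) (F : 'I_k -> S) :
  gsum (fun i => if i == i0 then F i else z) = F i0.
Proof. by rewrite /gsum -big_mkcond big_pred1_eq. Qed.

Lemma gsum_zero k : gsum (fun _ : 'I_k => z) = z.
Proof. by rewrite /gsum big1. Qed.

Definition gsg (k l : 'I_n) (g : Gm) : 'M[Gm]_n :=
  \matrix_(a, b) if (a == k) && (b == l) then g else gs_gzero T.

Definition ssg (k l : 'I_n) (x : S) : 'M[S]_n :=
  \matrix_(a, b) if (a == k) && (b == l) then x else z.

Lemma mx_mul_gsg (X B : 'M[S]_n) k l g p q :
  mx_mul X (gsg k l g) B p q = gs_mul (X p k) g (B l q).
Proof.
rewrite /mx_mul mxE.
transitivity (gsum (fun k' : 'I_n => if k' == k then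
   gsum (fun l' : 'I_n => if l' == l then gs_mul (X p k') g (B l' q) else z)
   else z)).
  congr gsum; apply: functional_extensionality => k'.
  case: eqP => [->|ne].
    congr gsum; apply: functional_extensionality => l'.
    by rewrite mxE eqxx /=; case: eqP => //; rewrite gs_mul0m.
  rewrite -(gsum_zero n); congr gsum; apply: functional_extensionality => l'.
  by rewrite mxE; case: eqP => //= _; rewrite gs_mul0m.
by rewrite gsum_delta gsum_delta.
Qed.

Lemma mx_big_entry k (M : 'I_k -> 'M[S]_n) p q :
  (\big[@mx_add T n/mx_zero T n]_(t < k) M t) p q = gsum (fun t => M t p q).
Proof.
rewrite /gsum; apply: (big_morph (fun A : 'M[S]_n => A p q)).
  by move=> A B; rewrite /mx_add mxE.
by rewrite /mx_zero mxE.
Qed.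

Definition Fm (mu : S -> R) (A : 'M[S]_n) : R :=
  \big[Rmin/1%R]_(i < n) \big[Rmin/1%R]_(j < n) mu (A i j).

Lemma Fm_le mu (A : 'M[S]_n) i j : (Fm mu A <= mu (A i j))%R.
Proof. apply: Rle_trans (bigmin_le _ i) _; exact: bigmin_le. Qed.

Lemma Fm_ge mu (A : 'M[S]_n) r : (r <= 1)%R -> (forall i j, r <= mu (A i j))%R ->
  (r <= Fm mu A)%R.
Proof. by move=> r1 H; apply: bigmin_ge => // i; apply: bigmin_ge. Qed.

Lemma Fm_le1 mu A : (Fm mu A <= 1)%R.
Proof. exact: bigmin_le1. Qed.

Let o : 'I_n := Ordinal hn.

Lemma Fm_const mu a : (mu a <= 1)%R -> Fm mu (const_mx a) = mu a.
Proof.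
move=> h; apply: Rle_antisym.
  by apply: Rle_trans (Fm_le _ _ o o) _; rewrite mxE; apply: Rle_refl.
by apply: Fm_ge => // i j; rewrite mxE; apply: Rle_refl.
Qed.

Lemma Fm_ideal mu : fuzzy_ideal_S mu -> fuzzy_ideal_Sn (Fm mu).
Proof.
move=> H; have H' := H; rewrite /fuzzy_ideal_S /fuzzy_ideal_Sn in H.
case: H' => [H01 [_ [Had [Hr [Hl H0]]]]].
split; [|split; [|split; [|split; [|split]]]].
- move=> A; split; last exact: Fm_le1.
  apply: Fm_ge; [lra | move=> i j; apply H01].
- exists (mx_zero T n); suff ->: Fm mu (mx_zero T n) = 1%R by lra.
  apply: Rle_antisym; first exact: Fm_le1.
  by apply: Fm_ge => [|i j]; rewrite ?mxE ?H0; apply: Rle_refl.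
- move=> A B; apply: Fm_ge.
    apply: Rle_trans (Rmin_l _ _) _; exact: Fm_le1.
  move=> i j; rewrite /mx_add mxE; apply: Rle_trans (Had _ _).
  apply: Rmin_glb.
    apply: Rle_trans (Rmin_l _ _) _; exact: Fm_le.
  apply: Rle_trans (Rmin_r _ _) _; exact: Fm_le.
- move=> A D B; apply: Fm_ge; first exact: Fm_le1.
  move=> i j; rewrite /mx_mul mxE /gsum; apply: (fsum_ge H); first exact: Fm_le1.
  move=> k; apply: (fsum_ge H); first exact: Fm_le1.
  move=> l; apply: Rle_trans (Hr _ _ _); exact: Fm_le.
- move=> A D B; apply: Fm_ge; first exact: Fm_le1.
  move=> i j; rewrite /mx_mul mxE /gsum; apply: (fsum_ge H); first exact: Fm_le1.
  move=> k; apply: (fsum_ge H); first exact: Fm_le1.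
  move=> l; apply: Rle_trans (Hl _ _ _); exact: Fm_le.
- apply: Rle_antisym; first exact: Fm_le1.
  by apply: Fm_ge => [|i j]; rewrite ?mxE ?H0; apply: Rle_refl.
Qed.

Lemma ideal_const (nu : 'M[S]_n -> R) : fuzzy_ideal_Sn nu ->
  fuzzy_ideal_S (fun a => nu (const_mx a)).
Proof.
case=> [H01 [_ [Had [Hr [Hl H0]]]]].
have ez : const_mx z = mx_zero T n by apply/matrixP => i j; rewrite !mxE.
have emul : forall a g b, const_mx (gs_mul a g b) =
     mx_mul (const_mx a) (gsg o o g) (const_mx b).
  by move=> a g b; apply/matrixP => i j; rewrite mx_mul_gsg !mxE.
split; [|split; [|split; [|split; [|split]]]].
- by move=> x; apply H01.
- by exists z; rewrite ez H0; lra.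
- move=> x y.
  have -> : const_mx (gs_add x y) = mx_add (const_mx x : 'M[S]_n) (const_mx y).
    by apply/matrixP => i j; rewrite /mx_add !mxE.
  exact: Had.
- by move=> x g y; rewrite emul; apply: Hr.
- by move=> x g y; rewrite emul; apply: Hl.
- by rewrite ez.
Qed.

Hypothesis hl : has_left_unity T.
Hypothesis hr : has_right_unity T.

Lemma nu_const_ge (nu : 'M[S]_n -> R) (A : 'M[S]_n) i j : fuzzy_ideal_Sn nu ->
  (nu A <= nu (const_mx (A i j)))%R.
Proof.
move=> H; have H' := H; rewrite /fuzzy_ideal_S /fuzzy_ideal_Sn in H. case: H' => [H01 [_ [_ [Hr [Hl _]]]]].
case: hl => k1 [e [d Hle]]; case: hr => k2 [g [f Hri]].
have -> : const_mx (A i j) =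
  \big[@mx_add T n/mx_zero T n]_(t < k1) \big[@mx_add T n/mx_zero T n]_(s < k2)
    mx_mul (mx_mul (const_mx (e t)) (gsg o i (d t)) A) (gsg j o (g s))
      (const_mx (f s)).
  apply/matrixP => p q; rewrite mx_big_entry mxE -[LHS]Hle.
  congr gsum; apply: functional_extensionality => t.
  rewrite mx_big_entry -[LHS]Hri.
  congr gsum; apply: functional_extensionality => s.
  by rewrite !mx_mul_gsg !mxE.
apply: (fsum_ge H); first by apply H01.
move=> t; apply: (fsum_ge H); first by apply H01.
move=> s; apply: Rle_trans (Hl _ _ _); exact: Hr.
Qed.

Lemma nu_ge_Fm (nu : 'M[S]_n -> R) (A : 'M[S]_n) : fuzzy_ideal_Sn nu ->
  (Fm (fun a => nu (const_mx a)) A <= nu A)%R.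
Proof.
move=> H; have H' := H; rewrite /fuzzy_ideal_S /fuzzy_ideal_Sn in H. case: H' => [H01 [_ [_ [Hr [Hl _]]]]].
case: hl => k1 [e [d Hle]]; case: hr => k2 [g [f Hri]].
have E : A = \big[@mx_add T n/mx_zero T n]_(i < n)
  \big[@mx_add T n/mx_zero T n]_(j < n)
  \big[@mx_add T n/mx_zero T n]_(t < k1) \big[@mx_add T n/mx_zero T n]_(s < k2)
    mx_mul (mx_mul (ssg i o (e t)) (gsg o o (d t)) (const_mx (A i j)))
      (gsg o o (g s)) (ssg o j (f s)).
  apply/matrixP => p q; rewrite mx_big_entry.
  transitivity (gsum (fun i : 'I_n => if i == p then A i q else z)).
    by rewrite gsum_delta.
  congr gsum; apply: functional_extensionality => i.
  rewrite mx_big_entry.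
  case: (eqVneq i p) => [->|ne].
    rewrite -[LHS](gsum_delta q (fun j => A p j)).
    congr gsum; apply: functional_extensionality => j.
    rewrite mx_big_entry.
    case: (eqVneq j q) => [->|nej].
      rewrite -[LHS]Hle; congr gsum; apply: functional_extensionality => t.
      rewrite mx_big_entry -[LHS]Hri.
      congr gsum; apply: functional_extensionality => s.
      by rewrite !mx_mul_gsg !mxE !eqxx.
    rewrite -(gsum_zero k1); congr gsum; apply: functional_extensionality => t.
    rewrite mx_big_entry -(gsum_zero k2).
    congr gsum; apply: functional_extensionality => s.
    by rewrite !mx_mul_gsg !mxE (eq_sym q j) (negbTE nej) andbF gs_mul0r.
  rewrite -(gsum_zero n); congr gsum; apply: functional_extensionality => j.
  rewrite mx_big_entry -(gsum_zero k1).
  congr gsum; apply: functional_extensionality => t.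
  rewrite mx_big_entry -(gsum_zero k2).
  congr gsum; apply: functional_extensionality => s.
  by rewrite !mx_mul_gsg !mxE (eq_sym p i) (negbTE ne) /= !gs_mul0l.
rewrite [in X in (_ <= X)%R]E; apply: (fsum_ge H); first exact: Fm_le1.
move=> i; apply: (fsum_ge H); first exact: Fm_le1.
move=> j; apply: (fsum_ge H); first exact: Fm_le1.
move=> t; apply: (fsum_ge H); first exact: Fm_le1.
move=> s; apply: Rle_trans (Hl _ _ _); apply: Rle_trans (Hr _ _ _).
exact: (Fm_le (fun a => nu (const_mx a)) A i j).
Qed.

Lemma Fm_surj (nu : 'M[S]_n -> R) : fuzzy_ideal_Sn nu -> Fm (fun a => nu (const_mx a)) = nu.
Proof.
move=> H; apply: functional_extensionality => A; apply: Rle_antisym.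
  exact: nu_ge_Fm.
apply: Fm_ge; first by case: H => H01 _; apply H01.
move=> i j; exact: nu_const_ge.
Qed.

Lemma main_thm :
  exists F : (gsS T -> R) -> ('M[gsS T]_n -> R),
    (forall mu, fuzzy_ideal_S mu -> fuzzy_ideal_Sn (F mu)) /\
    (forall mu nu, fuzzy_ideal_S mu -> fuzzy_ideal_S nu ->
        F mu = F nu -> mu = nu) /\
    (forall nu, fuzzy_ideal_Sn nu ->
        exists mu, fuzzy_ideal_S mu /\ F mu = nu) /\
    (forall mu nu, fuzzy_ideal_S mu -> fuzzy_ideal_S nu ->
        (fuzzy_incl mu nu <-> fuzzy_incl (F mu) (F nu))).
Proof.
exists Fm; split; [exact: Fm_ideal|split; [|split]].
- move=> mu nu [Hm _] [Hn _] E; apply: functional_extensionality => a.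
  rewrite -(Fm_const (proj2 (Hm a))) -(Fm_const (proj2 (Hn a))).
  by rewrite E.
- move=> nu H; exists (fun a => nu (const_mx a)); split.
    exact: ideal_const.
  exact: Fm_surj.
- move=> mu nu [Hm _] [Hn _]; split.
    move=> Hi A; apply: Fm_ge; first exact: Fm_le1.
    move=> i j; apply: Rle_trans (Hi _); exact: Fm_le.
  move=> Hi a.
  rewrite -(Fm_const (proj2 (Hm a))) -(Fm_const (proj2 (Hn a))).
  exact: Hi.
Qed.

End Main.

Theorem theorem3p12 (T : GammaSemiring) (n : nat) (hn : (0 < n)%N)
  (hl : has_left_unity T) (hr : has_right_unity T) :
  exists F : (gsS T -> R) -> ('M[gsS T]_n -> R),
    (forall mu, fuzzy_ideal_S mu -> fuzzy_ideal_Sn (F mu)) /\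
    (forall mu nu, fuzzy_ideal_S mu -> fuzzy_ideal_S nu ->
        F mu = F nu -> mu = nu) /\
    (forall nu, fuzzy_ideal_Sn nu ->
        exists mu, fuzzy_ideal_S mu /\ F mu = nu) /\
    (forall mu nu, fuzzy_ideal_S mu -> fuzzy_ideal_S nu ->
        (fuzzy_incl mu nu <-> fuzzy_incl (F mu) (F nu))).
Proof. exact: (main_thm hn hl hr). Qed.
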